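(* For every integer $n\ge2$, $$\mathfrak{C}_n(x)=2x^2\,\mathfrak{C}_{n-2}(x)+\left(\frac x4+4x^3\right)\mathfrak{C}'_{n-2}(x)+\left(\frac{x^2}4+x^4\right)\mathfrak{C}''_{n-2}(x),$$ where primes denote derivatives with respect to $x$.
   Context: For $n\ge1$ the central factorial is $x^{[n]}=x\,(x+\tfrac n2-1)(x+\tfrac n2-2)\cdots(x-\tfrac n2+1)$ (a product of $n$ factors), and $x^{[0]}=1$. The central factorial numbers of the second kind $T(n,k)$ ($0\le k\le n$) are defined by $x^n=\sum_{k=0}^n T(n,k)\,x^{[k]}$; equivalently $T(n,k)=\frac1{k!}\sum_{j=0}^k(-1)^j\binom kj\left(\frac k2-j\right)^n$, and $T(n,k)=0$ for $k>n$. The $n$th central Fubini-like polynomial is $\mathfrak{C}_n(x)=\sum_{k=0}^n k!\,T(n,k)\,x^k$. *)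

(* Defs.v *)
From HB Require Import structures.
From mathcomp Require Import all_boot all_order all_algebra.
Set Implicit Arguments. Unset Strict Implicit. Unset Printing Implicit Defensive.
Import Order.TTheory GRing.Theory Num.Theory.
Local Open Scope ring_scope.

(* Central factorial numbers of the second kind, via the explicit formula
   T(n,k) = 1/k! * sum_{j=0}^k (-1)^j C(k,j) (k/2 - j)^n, as rationals. *)
Definition cfT (n k : nat) : rat :=
  (k`!%:R)^-1 * \sum_(j < k.+1)
     (-1) ^+ j * ('C(k, j))%:R * ((k%:R / 2%:R) - j%:R) ^+ n.

Definition cfub (n : nat) : {poly rat} :=
  \sum_(k < n.+1) ((k`!%:R * cfT n k) *: 'X^k).

(* Main.v *)
Require Import Defs.
From HB Require Import structures.
From mathcomp Require Import all_boot all_order all_algebra.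
From mathcomp Require Import ring.
Import GRing.Theory Num.Theory.
Local Open Scope ring_scope.

Definition A (n k : nat) : rat :=
  \sum_(j < k.+1) (-1) ^+ j * ('C(k, j))%:R * ((k%:R / 2%:R) - j%:R) ^+ n.

Lemma alt0 k : (0 < k)%N -> \sum_(j < k.+1) (-1) ^+ j * ('C(k, j))%:R = 0 :> rat.
Proof.
move=> k0; have := exprBn (1:rat) 1 k.
rewrite subrr expr0n eqn0Ngt k0 /= => h; rewrite [RHS]h.
by apply: eq_bigr => i _; rewrite !expr1n !mulr1 mulr_natr.
Qed.

Lemma L1 k (F : nat -> rat) :
  \sum_(j < k.+2) (-1) ^+ j * ('C(k.+1, j))%:R * j%:R * F j
  = - (k.+1)%:R * \sum_(i < k.+1) (-1) ^+ i * ('C(k, i))%:R * F i.+1.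
Proof.
rewrite big_ord_recl /= mulr0 mul0r add0r mulr_sumr.
apply: eq_bigr => i _.
have h : ('C(k.+1, (bump 0 i)) * (bump 0 i) = k.+1 * 'C(k, i))%N.
  by rewrite /bump /= add1n mulnC -mul_bin_diag.
have hR : ('C(k.+1, (bump 0 i)))%:R * (bump 0 i)%:R = (k.+1)%:R * ('C(k, i))%:R :> rat.
  by rewrite -!natrM h.
transitivity ((-1) ^+ (bump 0 i) * (('C(k.+1, (bump 0 i)))%:R * (bump 0 i)%:R) * F (bump 0 i)); first by ring.
rewrite hR exprS; ring.
Qed.

Lemma L2 k (H : nat -> rat) :
  \sum_(i < k.+2) (-1) ^+ i * ('C(k.+1, i))%:R * ((k.+1)%:R - i%:R) * H i
  = (k.+1)%:R * \sum_(i < k.+1) (-1) ^+ i * ('C(k, i))%:R * H i.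
Proof.
rewrite big_ord_recr /= subrr mulr0 mul0r addr0 mulr_sumr.
apply: eq_bigr => i _.
have hi : (i <= k.+1)%N := ltnW (ltn_ord i).
have h : ('C(k.+1, i) * (k.+1 - i) = k.+1 * 'C(k, i))%N.
  by rewrite mulnC -mul_bin_down.
have hR : ('C(k.+1, i))%:R * ((k.+1)%:R - i%:R) = (k.+1)%:R * ('C(k, i))%:R :> rat.
  by rewrite -natrB // -!natrM h.
transitivity ((-1) ^+ i * (('C(k.+1, i))%:R * ((k.+1)%:R - i%:R)) * H i); first by ring.
rewrite hR; ring.
Qed.

Lemma A0 k : (0 < k)%N -> A 0 k = 0.
Proof.
move=> k0; rewrite /A -[RHS](alt0 _ k0); apply: eq_bigr => j _.
by rewrite expr0 mulr1.
Qed.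

Lemma A1 k : (1 < k)%N -> A 1 k = 0.
Proof.
case: k => [|[|k]] // _; rewrite /A.
transitivity (((k.+2)%:R / 2%:R) * \sum_(j < k.+3) (-1) ^+ j * ('C(k.+2, j))%:R
   - \sum_(j < k.+3) (-1) ^+ j * ('C(k.+2, j))%:R * j%:R * (fun _ => 1 : rat) j).
  rewrite mulr_sumr -sumrB; apply: eq_bigr => j _; ring.
rewrite (L1 k.+1 (fun _ => 1)) (alt0 k.+2) //.
under eq_bigr do rewrite mulr1.
by rewrite alt0 // !mulr0 subrr.
Qed.

Lemma Arec m k : A m.+2 k = (k%:R ^+ 2 / 4%:R) * A m k
  + (if k is k'.+2 then (k%:R * (k%:R - 1)) * A m k' else 0).
Proof.
have -> : A m.+2 k = (k%:R ^+ 2 / 4%:R) * A m k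
   - \sum_(j < k.+1) (-1) ^+ j * ('C(k, j))%:R * j%:R
        * ((k%:R - j%:R) * ((k%:R / 2%:R) - j%:R) ^+ m).
  rewrite /A mulr_sumr -sumrB; apply: eq_bigr => j _.
  by rewrite !exprS; field.
case: k => [|[|k]].
- rewrite big_ord1 /= !mulr0 !mul0r; ring.
- rewrite !big_ord_recl big_ord0 /= /bump /=; ring.
rewrite (L1 k.+1 (fun j => ((k.+2)%:R - j%:R) * ((k.+2)%:R/2%:R - j%:R)^+m)) mulNr opprK; congr (_ + _).
rewrite (eq_bigr (fun i : 'I_k.+2 => (-1) ^+ i * ('C(k.+1, i))%:R * ((k.+1)%:R - i%:R)
   * ((k%:R / 2%:R) - i%:R) ^+ m)); last first.
  move=> i _.
  have e1 : (k.+2)%:R - (i.+1)%:R = (k.+1)%:R - i%:R :> rat by ring.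
  have e2 : (k.+2)%:R / 2%:R - (i.+1)%:R = k%:R / 2%:R - i%:R :> rat by field.
  rewrite e1 e2; ring.
rewrite (L2 k (fun i => (k%:R / 2%:R - i%:R) ^+ m)) /A; ring.
Qed.

Lemma Avan_aux n : (forall k, (n < k)%N -> A n k = 0) /\ (forall k, (n.+1 < k)%N -> A n.+1 k = 0).
Proof.
elim: n => [|n [IH0 IH1]].
  by split; [exact: A0 | exact: A1].
split=> // k hk; rewrite Arec IH0; last by apply: ltn_trans hk; apply: ltn_trans (ltnSn _) _.
case: k hk => [|[|k]] //= hk; rewrite ?IH0 ?mulr0 ?addr0 //.
Qed.

Lemma Avan n k : (n < k)%N -> A n k = 0.
Proof. by case: (Avan_aux n) => H _; apply: H. Qed.

Lemma coef_cfub n k : (cfub n)`_k = A n k.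
Proof.
rewrite /cfub -(poly_def _ (fun k => k`!%:R * cfT n k)) coef_poly.
case: ifP => hk; last by rewrite Avan // ltnNge -ltnS hk.
rewrite /cfT mulrA mulfV ?mul1r //.
by rewrite pnatr_eq0 -lt0n fact_gt0.
Qed.

Lemma ff2 n : (n.+2 ^_ 2 = n.+2 * n.+1)%N.
Proof. by rewrite !ffactnS ffactn0 muln1. Qed.

Theorem theorem6 (n : nat) (hn : (2 <= n)%N) :
  cfub n =
    (2%:R *: 'X^2) * cfub (n - 2)
    + ((1 / 4%:R) *: 'X + 4%:R *: 'X^3) * (cfub (n - 2))^`()
    + ((1 / 4%:R) *: 'X^2 + 'X^4) * (cfub (n - 2))^`(2).
Proof.
have [m ->] : exists m, n = m.+2 by exists (n - 2)%N; rewrite -addn2 subnK.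
rewrite -addn2 addnK addn2.
apply/polyP => k.
rewrite !mulrDl -!scalerAl !coefD !coefZ coefXM !coefXnM.
rewrite !coef_derivn !coef_deriv !coef_cfub Arec.
case: k => [|[|[|[|k]]]] /=; 
  rewrite ?subSS ?subn0 ?subnn ?add2n ?addn0 ?ff2; by field.
Qed.
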